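(* Let $n\ge3$ and $2\le j\le n-1$. A permutation $\sigma\in\mathfrak S_n$ is minimal in the right weak order within its $\equiv^{(j)}$-class if and only if $\sigma$ admits a reduced word accepted by the automaton $\mathcal U(j)$.
   Context: Simple transpositions $s_i=(i,i+1)$, $1\le i\le n-1$. A word $s_{i_1}\cdots s_{i_k}$ represents the permutation obtained from the identity word $12\cdots n$ by successively swapping the letters in positions $i_1$, then $i_2$, \dots, then $i_k$; it is reduced if $k$ is minimal (equal to the number of inversions). Right weak order: $\sigma\le\tau$ iff value-inversions of $\sigma$ are contained in those of $\tau$. The congruence $\equiv^{(j)}$ on $\mathfrak S_n$ (permutations as words) is the equivalence relation generated by $U\,j\,V\,ac\,W\equiv U\,j\,V\,ca\,W$ for all $a<j<c$ with $a,c$ adjacent letters and $U,V,W$ words (equivalently, the permutree congruence for the decoration with $\delta_j=\text{up}$ and all other letters none). The automaton $\mathcal U(j)$ over the alphabet $\{s_1,\dots,s_{n-1}\}$ has states $h_k,i_k$ for $j-1\le k\le n-1$ and $d_k$ for $j-1\le k\le n-2$; initial state $h_{j-1}$; accepting states all $h_k$ and $i_k$; rejecting states all $d_k$. Transitions: for $j-1\le k\le n-2$, $h_k\xrightarrow{s_k}i_k$, $h_k\xrightarrow{s_{k+1}}h_{k+1}$, $i_k\xrightarrow{s_{k+1}}d_k$; and $h_{n-1}\xrightarrow{s_{n-1}}i_{n-1}$. Every letter not listed at a state leaves the state unchanged (so each $d_k$ is a rejecting sink). *)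

(* Defs.v *)
From Stdlib Require Import Relation_Operators.
From mathcomp Require Import all_boot.

Set Implicit Arguments.
Unset Strict Implicit.
Unset Printing Implicit Defensive.

(* Permutations of [n] = {1,...,n} are represented as words (seq nat)
   that are rearrangements of 1 2 ... n. Positions are 1-indexed. *)
Definition is_perm (n : nat) (w : seq nat) : Prop := perm_eq w (iota 1 n).

Definition id_word (n : nat) : seq nat := iota 1 n.

(* swap the letters in positions i and i+1 (1-indexed); identity if out of range *)
Definition swap_pos (w : seq nat) (i : nat) : seq nat :=
  if (1 <= i) && (i < size w) then
    take i.-1 w ++ [:: nth 0 w i; nth 0 w i.-1] ++ drop i.+1 w
  else w.

(* the permutation represented by the word s_{i_1} ... s_{i_k}: successively
   swap positions i_1, then i_2, ..., then i_k, starting from 12...n *)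
Definition word_perm (n : nat) (ws : seq nat) : seq nat :=
  foldl swap_pos (id_word n) ws.

Definition ninv (w : seq nat) : nat :=
  \sum_(p < size w) \sum_(q < size w)
     ((p < q) && (nth 0 w q < nth 0 w p)).

Definition reduced_word (n : nat) (ws : seq nat) (sigma : seq nat) : Prop :=
  all (fun i => (1 <= i) && (i <= n - 1)) ws /\
  word_perm n ws = sigma /\
  size ws = ninv sigma.

Definition vinv (w : seq nat) (a b : nat) : bool :=
  [&& a < b, a \in w, b \in w & index b w < index a w].

(* right weak order: sigma <= tau iff inversions of sigma are inversions of tau *)
Definition weak_le (sigma tau : seq nat) : Prop :=
  forall a b, vinv sigma a b -> vinv tau a b.

Definition cstep (j : nat) (u v : seq nat) : Prop :=
  exists (U V W : seq nat) (a c : nat),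
    a < j < c /\
    u = U ++ j :: V ++ [:: a; c] ++ W /\
    v = U ++ j :: V ++ [:: c; a] ++ W.

Definition congj (j : nat) : seq nat -> seq nat -> Prop :=
  clos_refl_sym_trans (seq nat) (cstep j).

Definition minimal_in_class (j : nat) (sigma : seq nat) : Prop :=
  forall tau, congj j sigma tau -> weak_le tau sigma -> tau = sigma.

Inductive ustate := Hs of nat | Is of nat | Ds of nat.

Definition ustep (n : nat) (q : ustate) (s : nat) : ustate :=
  match q with
  | Hs k => if s == k then Is k
            else if (s == k.+1) && (k <= n - 2) then Hs k.+1
            else Hs k
  | Is k => if (s == k.+1) && (k <= n - 2) then Ds k else Is k
  | Ds k => Ds k
  end.

Definition uaccepting (q : ustate) : bool :=
  match q with Hs _ | Is _ => true | Ds _ => false end.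

Definition accepted (n j : nat) (ws : seq nat) : bool :=
  uaccepting (foldl (ustep n) (Hs j.-1) ws).

(* Main.v *)
Require Import Defs.
From mathcomp Require Import all_boot zify.
From Stdlib Require Import Relation_Operators.
Set Implicit Arguments.
Unset Strict Implicit.


Lemma size_swap w i : size (swap_pos w i) = size w.
Proof.
rewrite /swap_pos; case: ifP => // /andP[h1 h2].
rewrite size_cat /= size_takel ?size_drop; lia.
Qed.

Lemma swap_cat L (x y : nat) T : swap_pos (L ++ x :: y :: T) (size L).+1 = L ++ y :: x :: T.
Proof.
rewrite /swap_pos size_cat /=.
have -> : (size L).+1 < size L + (size T).+2 by lia.
rewrite take_size_cat // !nth_cat ltnn subnn /= ltnNge leqnSn /= subSnn /=.
rewrite drop_cat; have -> : (size L).+2 < size L = false by lia.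
have -> : (size L).+2 - size L = 2 by lia.
by rewrite /= drop0.
Qed.

Lemma swap_decomp (w : seq nat) i : 1 <= i < size w ->
  exists L x y T, w = L ++ x :: y :: T /\ size L = i.-1.
Proof.
move=> /andP[h1 h2].
exists (take i.-1 w), (nth 0 w i.-1), (nth 0 w i), (drop i.+1 w).
split; last by rewrite size_take; case: ifP => //; lia.
rewrite -[LHS](cat_take_drop i.-1) (drop_nth 0); last lia.
by rewrite (drop_nth 0 (n:=i.-1.+1)); [rewrite prednK | lia].
Qed.

Lemma swap_outside w i : ~~ ((1 <= i) && (i < size w)) -> swap_pos w i = w.
Proof. by rewrite /swap_pos => /negbTE ->. Qed.

Lemma nth_swap (w : seq nat) i p : 1 <= i < size w ->
  nth 0 (swap_pos w i) p = if p == i.-1 then nth 0 w i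
                           else if p == i then nth 0 w i.-1 else nth 0 w p.
Proof.
move=> hi; have [L [x [y [T [-> hL]]]]] := swap_decomp hi.
have -> : i = (size L).+1 by move: hi; lia.
rewrite swap_cat /= !nth_cat.
have e1 : (size L).+1 < size L = false by lia.
rewrite ltnn subnn e1 subSnn /=.
case: (ltngtP p (size L)) => hp.
- have e3 : (p == (size L).+1) = false by lia.
  by rewrite e3.
- case: eqP => [->|hne]; first by rewrite subSnn.
  have : p - size L > 1 by lia.
  by case: (p - size L) => [|[|k]].
- by rewrite hp subnn.
Qed.

Lemma perm_swap w i : perm_eq (swap_pos w i) w.
Proof.
case: (boolP ((1 <= i) && (i < size w))) => hi; last by rewrite swap_outside.
have [L [x [y [T [-> hL]]]]] := swap_decomp hi.
have -> : i = (size L).+1 by move: hi; lia.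
rewrite swap_cat perm_cat2l.
by rewrite -[y :: x :: T]/([:: y; x] ++ T) -[x :: y :: T]/([:: x; y] ++ T) perm_cat2r
   (perm_catC [:: y] [:: x]).
Qed.

Lemma swap_swap w i : swap_pos (swap_pos w i) i = w.
Proof.
case: (boolP ((1 <= i) && (i < size w))) => hi; last by rewrite !swap_outside // size_swap.
have [L [x [y [T [-> hL]]]]] := swap_decomp hi.
have -> : i = (size L).+1 by move: hi; lia.
by rewrite !swap_cat.
Qed.

Fixpoint ninv' (w : seq nat) : nat :=
  if w is x :: s then count (fun y => y < x) s + ninv' s else 0.

Lemma sum_count (a : pred nat) s : \sum_(i < size s) a (nth 0 s i) = count a s.
Proof.
elim: s => [|x s IH]; first by rewrite big_ord0.
by rewrite /= big_ord_recl /= IH.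
Qed.

Lemma ninvE w : ninv w = ninv' w.
Proof.
rewrite /ninv; elim: w => [|x s IH]; first by rewrite big_ord0.
rewrite /= big_ord_recl big_ord_recl /= add0n -IH.
rewrite (sum_count (fun y => y < x)); congr (_ + _).
apply: eq_bigr => i _; rewrite big_ord_recl /=.
by [].
Qed.

Lemma ninv'_cat_perm L R1 R2 : perm_eq R1 R2 ->
  ninv' (L ++ R1) + ninv' R2 = ninv' (L ++ R2) + ninv' R1.
Proof.
move=> hp; elim: L => [|z L IH] /=; first by rewrite addnC.
have -> : count (fun y => y < z) (L ++ R1) = count (fun y => y < z) (L ++ R2).
  by rewrite !count_cat (permP hp).
by rewrite -!addnA IH.
Qed.

Lemma ninv'_swap (w : seq nat) i : 1 <= i < size w ->
  ninv' (swap_pos w i) + (nth 0 w i < nth 0 w i.-1) = ninv' w + (nth 0 w i.-1 < nth 0 w i).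
Proof.
move=> hi; have [L [x [y [T [-> hL]]]]] := swap_decomp hi.
have -> : i = (size L).+1 by move: hi; lia.
rewrite swap_cat /= !nth_cat ltnn subnn /=.
have -> : (size L).+1 < size L = false by lia.
rewrite subSnn /=.
have hp : perm_eq [:: y, x & T] [:: x, y & T].
  by rewrite -[y :: x :: T]/([:: y; x] ++ T) -[x :: y :: T]/([:: x; y] ++ T) perm_cat2r
   (perm_catC [:: y] [:: x]).
have := ninv'_cat_perm L hp => /=.
lia.
Qed.

Lemma ninv'_iota m k : ninv' (iota m k) = 0.
Proof.
elim: k m => [|k IH] m //=; rewrite IH addn0.
apply/eqP; rewrite -leqn0 leqNgt -has_count; apply/hasPn => z.
rewrite mem_iota; lia.
Qed.

Lemma word_perm_rcons n ws i : word_perm n (rcons ws i) = swap_pos (word_perm n ws) i.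
Proof. by rewrite /word_perm foldl_rcons. Qed.

Lemma perm_word_perm n ws : perm_eq (word_perm n ws) (iota 1 n).
Proof.
elim/last_ind: ws => [|ws i IH]; first by rewrite /word_perm /= perm_refl.
by rewrite word_perm_rcons (perm_trans (perm_swap _ _)).
Qed.

Lemma size_word_perm n ws : size (word_perm n ws) = n.
Proof. by rewrite (perm_size (perm_word_perm n ws)) size_iota. Qed.

Lemma ninv'_swap_le w i : ninv' (swap_pos w i) <= (ninv' w).+1.
Proof.
case: (boolP ((1 <= i) && (i < size w))) => hi; last by rewrite swap_outside.
have := ninv'_swap hi; lia.
Qed.

Lemma ninv'_word_perm_le n ws : ninv' (word_perm n ws) <= size ws.
Proof.
elim/last_ind: ws => [|ws i IH]; first by rewrite /word_perm /id_word ninv'_iota.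
rewrite word_perm_rcons size_rcons; apply: leq_trans (ninv'_swap_le _ _) _; by [].
Qed.

Definition Good (n j : nat) (q : ustate) (w : seq nat) : Prop :=
  match q with
  | Hs k => k < n /\ nth 0 w k = j /\ (forall p, k < p < n -> j < nth 0 w p)
  | Is k => k < n /\ exists p0, p0 < k /\ nth 0 w p0 = j /\
             (forall p, p0 < p <= k -> nth 0 w p < j) /\
             (forall p, k < p < n -> j < nth 0 w p)
  | Ds _ => True
  end.

Lemma good_step n j q w i : size w = n -> 1 <= i <= n - 1 ->
  nth 0 w i.-1 < nth 0 w i -> Good n j q w -> Good n j (ustep n q i) (swap_pos w i).
Proof.
move=> hs hi asc; have hi' : 1 <= i < size w by lia.
case: q => k /=.
- move=> [hk [hj Hb]].
  case: eqP => [ei|nei].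
    subst i; split => //; exists k.-1; split; first lia.
    rewrite nth_swap // eqxx; split => //; split.
      move=> p hp; rewrite nth_swap //.
      have -> : p = k by lia.
      have -> : (k == k.-1) = false by lia.
      by rewrite eqxx -hj.
    move=> p hp; rewrite nth_swap //.
    have -> : (p == k.-1) = false by lia.
    have -> : (p == k) = false by lia.
    apply: Hb; lia.
  case: ifP => [/andP[/eqP ei hk2]|hne].
    subst i; split; first lia.
    rewrite nth_swap // eqxx /=.
    have -> : (k.+1 == k) = false by lia.
    split => //.
    move=> p hp; rewrite nth_swap //.
    have -> : (p == k) = false by lia.
    have -> : (p == k.+1) = false by lia.
    apply: Hb; lia.
  have nk1 : i != k.+1 by move: hne hi; lia.
  split => //; split.
    rewrite nth_swap //.
    have -> : (k == i.-1) = false by lia.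
    have -> : (k == i) = false by lia.
    by [].
  move=> p hp; rewrite nth_swap //.
  case: eqP => e1; first by apply: Hb; lia.
  case: eqP => e2; first by apply: Hb; lia.
  apply: Hb; lia.
- move=> [hk [p0 [hp0 [hj [Hs Hb]]]]].
  case: ifP => [//|hne].
  have nk1 : i != k.+1 by move: hne hi; lia.
  split => //.
  case: (i =P p0.+1) => ei.
    have := Hs p0.+1; rewrite ei /= in asc; rewrite hj in asc; lia.
  case: (i =P p0) => ei2.
    subst i; exists p0.-1; split; first lia.
    rewrite nth_swap // eqxx; split => //; split.
      move=> p hp; rewrite nth_swap //.
      have -> : (p == p0.-1) = false by lia.
      case: eqP => e2; first by rewrite -hj.
      by apply: Hs; lia.
    move=> p hp; rewrite nth_swap //.
    have -> : (p == p0.-1) = false by lia.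
    have -> : (p == p0) = false by lia.
    apply: Hb; lia.
  exists p0; split => //; split.
    rewrite nth_swap //.
    have -> : (p0 == i.-1) = false by lia.
    have -> : (p0 == i) = false by lia.
    by [].
  split.
    move=> p hp; rewrite nth_swap //.
    case: eqP => e1; first by apply: Hs; lia.
    case: eqP => e2; first by apply: Hs; lia.
    apply: Hs; lia.
  move=> p hp; rewrite nth_swap //.
  case: eqP => e1; first by apply: Hb; lia.
  case: eqP => e2; first by apply: Hb; lia.
  apply: Hb; lia.
- by [].
Qed.

Lemma run_inv n j ws : 1 <= j <= n ->
  all (fun i => (1 <= i) && (i <= n - 1)) ws -> ninv' (word_perm n ws) = size ws ->
  Good n j (foldl (ustep n) (Hs j.-1) ws) (word_perm n ws).
Proof.
move=> hj; elim/last_ind: ws => [|ws i IH].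
  move=> _ _ /=; rewrite /word_perm /id_word /=; split; first lia.
  rewrite nth_iota; last lia; split; first lia.
  move=> p hp; rewrite nth_iota; lia.
rewrite all_rcons => /andP[hi hall].
rewrite word_perm_rcons size_rcons foldl_rcons => hn.
have hle := ninv'_word_perm_le n ws.
have hsz := size_word_perm n ws.
have hi' : 1 <= i < size (word_perm n ws) by lia.
have H := ninv'_swap hi'.
case h1: (nth 0 (word_perm n ws) i.-1 < nth 0 (word_perm n ws) i) in H;
case h2: (nth 0 (word_perm n ws) i < nth 0 (word_perm n ws) i.-1) in H; try lia.
apply: good_step => //.
by apply: IH => //; lia.
Qed.

Lemma not_sorted_desc (s : seq nat) : ~~ sorted ltn s ->
  exists d, d.+1 < size s /\ nth 0 s d.+1 <= nth 0 s d.
Proof.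
elim: s => [|x s IH] //=.
case: s IH => [|y s] IH //=.
case: (ltnP x y) => hxy /=.
  move=> /IH [d [hd1 hd2]]; exists d.+1; split => //.
move=> _; exists 0; split => //.
Qed.

Lemma desc_exists n (s : seq nat) : perm_eq s (iota 1 n) -> s != iota 1 n ->
  exists d, d.+1 < size s /\ nth 0 s d.+1 < nth 0 s d.
Proof.
move=> hp hne.
case: (boolP (sorted ltn s)) => hs.
  case/negP: hne; apply/eqP; apply: (irr_sorted_eq ltn_trans ltnn hs (iota_ltn_sorted 1 n)).
  exact: perm_mem.
have [d [hd1 hd2]] := not_sorted_desc hs.
exists d; split => //; rewrite ltn_neqAle hd2 andbT.
have hu : uniq s by rewrite (perm_uniq hp) iota_uniq.
rewrite nth_uniq //; [by rewrite (gtn_eqF (ltnSn d)) | exact: ltnW hd1].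
Qed.

Lemma good_base n j q : 1 <= j <= n -> Good n j q (iota 1 n) -> uaccepting q -> q = Hs j.-1.
Proof.
move=> hj; case: q => k //=.
  move=> [hk [hk2 _]] _; rewrite nth_iota // in hk2; congr Hs; lia.
move=> [hk [p0 [hp0 [hj2 [Hs _]]]]] _.
have := Hs p0.+1; rewrite !nth_iota // in hj2 *; lia.
Qed.

Lemma choose n j q (s : seq nat) : size s = n -> perm_eq s (iota 1 n) ->
  Good n j q s -> uaccepting q -> s != iota 1 n ->
  exists i q', 1 <= i < n /\ nth 0 s i < nth 0 s i.-1 /\ Good n j q' (swap_pos s i) /\
    uaccepting q' /\ ustep n q' i = q.
Proof.
move=> hsz hp; case: q => k //=.
- move=> [hk [hj Hb]] _ hne.
  case: (boolP ((0 < k) && (j < nth 0 s k.-1))) => hc.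
    move/andP: hc => [k0 hc].
    have hi : 1 <= k < size s by lia.
    exists k, (Hs k.-1); split; first lia; split; first by rewrite hj.
    split; last first.
      split => //=; rewrite prednK //.
      have -> : (k == k.-1) = false by lia.
      have -> : k.-1 <= n - 2 by lia.
      by rewrite eqxx.
    split; first lia; split.
      by rewrite nth_swap // eqxx.
    move=> p hpp; rewrite nth_swap //.
    have -> : (p == k.-1) = false by lia.
    case: eqP => e; first by [].
    apply: Hb; lia.
  have [d [hd1 hd2]] := desc_exists hp hne.
  have dk : d != k.
    apply/eqP => e; subst d; have := Hb k.+1; rewrite hj in hd2; lia.
  have dk1 : d.+1 != k.
    apply/eqP => e; subst k; move: hc; rewrite /= -hj; lia.
  have hi : 1 <= d.+1 < size s by lia.
  exists d.+1, (Hs k); split; first lia; split => //.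
  split; last first.
    split => //=.
    have -> : (d.+1 == k) = false by lia.
    have -> : (d.+1 == k.+1) = false by lia.
    by [].
  split => //; split.
    rewrite nth_swap //.
    have -> : (k == d.+1.-1) = false by lia.
    have -> : (k == d.+1) = false by lia.
    by [].
  move=> p hpp; rewrite nth_swap //.
  case: eqP => e1; first by apply: Hb; lia.
  case: eqP => e2; first by apply: Hb; lia.
  apply: Hb; lia.
- move=> [hk [p0 [hp0 [hj [HS Hb]]]]] _ _.
  have hi : 1 <= p0.+1 < size s by lia.
  have hdesc : nth 0 s p0.+1 < nth 0 s p0.+1.-1 by rewrite /= hj; apply: HS; lia.
  case: (p0.+1 =P k) => e.
    subst k; exists p0.+1, (Hs p0.+1); split; first lia; split => //.
    split; last by split => //=; rewrite eqxx.
    split => //; split.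
      rewrite nth_swap //.
      have -> : (p0.+1 == p0.+1.-1) = false by lia.
      by rewrite eqxx.
    move=> p hpp; rewrite nth_swap //.
    have -> : (p == p0.+1.-1) = false by lia.
    have -> : (p == p0.+1) = false by lia.
    apply: Hb; lia.
  exists p0.+1, (Is k); split; first lia; split => //.
  split; last first.
    split => //=.
    have -> : (p0.+1 == k.+1) = false by lia.
    by [].
  split => //; exists p0.+1; split; first lia; split.
    rewrite nth_swap //.
    have -> : (p0.+1 == p0.+1.-1) = false by lia.
    by rewrite eqxx.
  split.
    move=> p hpp; rewrite nth_swap //.
    have -> : (p == p0.+1.-1) = false by lia.
    have -> : (p == p0.+1) = false by lia.
    apply: HS; lia.
  move=> p hpp; rewrite nth_swap //.
  have -> : (p == p0.+1.-1) = false by lia.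
  have -> : (p == p0.+1) = false by lia.
  apply: Hb; lia.
Qed.

Lemma construct n j : 1 <= j <= n -> forall m (s : seq nat) q, ninv' s = m ->
  perm_eq s (iota 1 n) -> Good n j q s -> uaccepting q ->
  exists ws, all (fun i => (1 <= i) && (i <= n - 1)) ws /\ word_perm n ws = s /\
    size ws = ninv' s /\ foldl (ustep n) (Hs j.-1) ws = q.
Proof.
move=> hj; elim=> [|m IH] s q hm hp hg ha.
  have hs : s = iota 1 n.
    apply/eqP; apply/negPn/negP => hne.
    have [d [hd1 hd2]] := desc_exists hp hne.
    have hi : 1 <= d.+1 < size s by lia.
    have := ninv'_swap hi; rewrite hm /= hd2; lia.
  subst s; exists [::]; split => //; split => //; split; first by rewrite ninv'_iota.
  by rewrite /= (good_base hj hg ha).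
have hsz : size s = n by rewrite (perm_size hp) size_iota.
have hne : s != iota 1 n by apply/eqP => e; move: hm; rewrite e ninv'_iota.
have [i [q' [hi [hd [hg' [ha' hst]]]]]] := choose hsz hp hg ha hne.
have hi' : 1 <= i < size s by lia.
have H := ninv'_swap hi'.
have H2 : ninv' (swap_pos s i) = m.
  have e : (nth 0 s i.-1 < nth 0 s i) = false by rewrite ltnNge (ltnW hd).
  move: H; rewrite hd hm e; lia.
have hp' : perm_eq (swap_pos s i) (iota 1 n) by apply: perm_trans (perm_swap _ _) hp.
have [ws [hall [hw [hsw hf]]]] := IH _ _ H2 hp' hg' ha'.
exists (rcons ws i); split; first by rewrite all_rcons hall andbT; lia.
split; first by rewrite word_perm_rcons hw swap_swap.
split; first by rewrite size_rcons hsw H2 hm.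
by rewrite foldl_rcons hf.
Qed.

Lemma nth_after (P R : seq nat) (j p : nat) : size P < p ->
  nth 0 (P ++ j :: R) p = nth 0 R (p - (size P).+1).
Proof.
move=> hp; rewrite nth_cat ltnNge (ltnW hp) /=.
have -> : p - size P = (p - (size P).+1).+1 by lia.
by [].
Qed.

Lemma lgood_good n j (s P S B : seq nat) : size s = n -> s = P ++ j :: S ++ B ->
  all (fun x => x < j) S -> all (fun x => j < x) B ->
  Good n j (if S is [::] then Hs (size P) else Is (size P + size S)) s.
Proof.
move=> hsz hs hS hB.
have hsz' : size s = size P + (size S + size B).+1 by rewrite hs size_cat /= size_cat.
have hj : nth 0 s (size P) = j by rewrite hs nth_cat ltnn subnn.
case: S hS hs hsz' => [|a S'] hS hs hsz' /=.
all: rewrite /= in hsz'.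
  split; first lia; split => //.
  move=> p hp; rewrite hs nth_after; last lia.
  apply: (all_nthP 0 hB); rewrite /=; lia.
split; first lia; exists (size P); split; first lia; split => //; split.
  move=> p hp; rewrite hs nth_after; last lia.
  rewrite nth_cat; have -> : p - (size P).+1 < size (a :: S') by rewrite /=; lia.
  apply: (all_nthP 0 hS); rewrite /=; lia.
move=> p hp; rewrite hs nth_after; last lia.
rewrite nth_cat; have -> : p - (size P).+1 < size (a :: S') = false by rewrite /=; lia.
apply: (all_nthP 0 hB); rewrite /=; lia.
Qed.

Lemma good_lgood n j q (s : seq nat) : size s = n -> Good n j q s -> uaccepting q ->
  exists P S B, s = P ++ j :: S ++ B /\ all (fun x => x < j) S /\ all (fun x => j < x) B.
Proof.
move=> hsz; case: q => k //=.
  move=> [hk [hj Hb]] _.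
  exists (take k s), [::], (drop k.+1 s); split.
    by rewrite -hj /= -(drop_nth 0) ?cat_take_drop //; lia.
  split => //; apply/(all_nthP 0) => i; rewrite size_drop nth_drop => hi.
  apply: Hb; lia.
move=> [hk [p0 [hp0 [hj [HS Hb]]]]] _.
exists (take p0 s), (take (k - p0) (drop p0.+1 s)), (drop k.+1 s); split.
  have e : drop k.+1 s = drop (k - p0) (drop p0.+1 s).
    by rewrite drop_drop; congr drop; lia.
  rewrite -hj e cat_take_drop -(drop_nth 0) ?cat_take_drop //; lia.
split.
  apply/(all_nthP 0) => i; rewrite size_takel; last by rewrite size_drop; lia.
  move=> hi; rewrite nth_take // nth_drop; apply: HS; lia.
apply/(all_nthP 0) => i; rewrite size_drop nth_drop => hi.
apply: Hb; lia.
Qed.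

Lemma decomp (j : nat) (R : seq nat) : j \notin R ->
  (exists S B, R = S ++ B /\ all (fun x => x < j) S /\ all (fun x => j < x) B) \/
  (exists V c a W, R = V ++ c :: a :: W /\ a < j < c).
Proof.
elim: R => [|x R IH].
  by move=> _; left; exists [::], [::].
rewrite in_cons negb_or => /andP[hx /IH [[S [B [-> [hS hB]]]]|[V [c [a [W [-> h]]]]]]].
- case: (ltngtP x j) => hxj; last by rewrite hxj eqxx in hx.
  + by left; exists (x :: S), B; rewrite /= hxj hS.
  + case: S hS => [|a S] hS.
      by left; exists [::], (x :: B); rewrite /= hxj hB.
    right; exists [::], x, a, (S ++ B); split => //.
    by move: hS => /= /andP[-> _]; rewrite hxj.
- by right; exists (x :: V), c, a, W.
Qed.

Lemma index_cons3 (a c x : nat) W :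
  index x [:: a, c & W] = if a == x then 0 else if c == x then 1 else (index x W).+2.
Proof. by rewrite /=; case: eqP => //; case: eqP. Qed.

Lemma vinv_swap2 (a c : nat) W x y : a < c -> vinv [:: a, c & W] x y -> vinv [:: c, a & W] x y.
Proof.
move=> hac /and4P[hxy hx hy hi]; apply/and4P; split => //.
  by move: hx; rewrite !inE orbCA.
  by move: hy; rewrite !inE orbCA.
move: hi; rewrite !index_cons3.
case: (a =P y) => ay; case: (c =P y) => cy; case: (a =P x) => ax; case: (c =P x) => cx;
  try lia.
Qed.

Lemma weak_le_cat (L r1 r2 : seq nat) :
  (forall x y, vinv r1 x y -> vinv r2 x y) -> r1 =i r2 -> weak_le (L ++ r1) (L ++ r2).
Proof.
move=> hv hm x y /and4P[hxy hx hy hi]; apply/and4P; split => //.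
  by move: hx; rewrite !mem_cat hm.
  by move: hy; rewrite !mem_cat hm.
move: hi; rewrite !index_cat.
case: (boolP (x \in L)) => xL; case: (boolP (y \in L)) => yL //.
- move=> h; have := index_mem x L; rewrite xL; lia.
- move=> _; have := index_mem y L; rewrite yL; lia.
- rewrite ltn_add2l => h.
  have hx' : x \in r1 by move: hx; rewrite mem_cat (negbTE xL).
  have hy' : y \in r1 by move: hy; rewrite mem_cat (negbTE yL).
  have /and4P[_ _ _ h2] : vinv r2 x y by apply: hv; apply/and4P; split.
  by rewrite ltn_add2l.
Qed.

Lemma minimal_lgood j (s : seq nat) : uniq s -> j \in s -> minimal_in_class j s ->
  exists P S B, s = P ++ j :: S ++ B /\ all (fun x => x < j) S /\ all (fun x => j < x) B.
Proof.
move=> hu hj hmin; case/splitPr: hj hu hmin => P R hu hmin.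
have jR : j \notin R by move: hu; rewrite cat_uniq => /and3P[_ _ /andP[]].
case: (decomp jR) => [[S [B [-> [hS hB]]]]|[V [c [a [W [hR hac]]]]]].
  by exists P, S, B.
exfalso; subst R.
set t := P ++ j :: V ++ [:: a, c & W].
have ht : t = P ++ j :: V ++ [:: c, a & W].
  apply: hmin.
    apply: rst_sym; apply: rst_step; exists P, V, W, a, c; split => //.
  rewrite /t.
  have e1 : forall X, P ++ j :: V ++ X = (P ++ j :: V) ++ X by move=> X; rewrite -catA.
  rewrite !e1; apply: weak_le_cat.
    move=> x y; apply: vinv_swap2; lia.
  by move=> z; rewrite !inE orbCA.
move/(f_equal (drop (size (P ++ j :: V)))): ht.
have e1 : forall X, P ++ j :: V ++ X = (P ++ j :: V) ++ X by move=> X; rewrite -catA.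
rewrite /t !e1 !drop_size_cat // => -[e _]; lia.
Qed.

Lemma filter_nil (j : nat) (B : seq nat) : all (fun x => j < x) B -> filter (fun x => x < j) B = [::].
Proof. elim: B => //= x B IH /andP[h1 h2]; rewrite IH //; case: ltngtP h1 => //. Qed.

Lemma filter_nil2 (j : nat) (S : seq nat) : all (fun x => x < j) S -> filter (fun x => j < x) S = [::].
Proof. elim: S => //= x S IH /andP[h1 h2]; rewrite IH //; case: ltngtP h1 => //. Qed.

Definition Inv (j : nat) (P S B : seq nat) (w : seq nat) : Prop :=
  uniq w /\ exists R, w = P ++ j :: R /\ j \notin R /\
    filter (fun x => x < j) R = S /\ filter (fun x => j < x) R = B.

Lemma cat_cons_inj (j : nat) (P U R Y : seq nat) : j \notin P -> j \notin U ->
  P ++ j :: R = U ++ j :: Y -> P = U /\ R = Y.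
Proof.
elim: P U => [|x P IH] [|y U] //=.
- by move=> _ _ [->].
- by move=> _; rewrite inE negb_or => /andP[/eqP hy _] [e]; rewrite e in hy.
- by rewrite inE negb_or => /andP[/eqP hx _] _ [e]; rewrite e in hx.
- rewrite !inE !negb_or => /andP[_ hP] /andP[_ hU] [-> e].
  by have [-> ->] := IH _ hP hU e.
Qed.

Lemma inv_transfer j P S B (U Y1 Y2 : seq nat) : j \notin P ->
  perm_eq Y1 Y2 -> filter (fun x => x < j) Y1 = filter (fun x => x < j) Y2 ->
  filter (fun x => j < x) Y1 = filter (fun x => j < x) Y2 ->
  Inv j P S B (U ++ j :: Y1) -> Inv j P S B (U ++ j :: Y2).
Proof.
move=> jP hp hf1 hf2 [hu [R [e [jR [h1 h2]]]]].
have jU : j \notin U by move: hu; rewrite cat_uniq => /and3P[_ /hasPn /(_ j) h _]; apply: h; rewrite inE eqxx.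
have [eP eR] := cat_cons_inj jP jU (esym e); subst U R.
split.
  by rewrite (perm_uniq (s2 := P ++ j :: Y1)) // perm_cat2l perm_cons perm_sym.
exists Y2; split => //; split; first by rewrite -(perm_mem hp).
by rewrite -hf1 -hf2.
Qed.

Lemma cstep_inv j P S B u v : j \notin P -> cstep j u v -> (Inv j P S B u <-> Inv j P S B v).
Proof.
move=> jP [U [V [W [a [c [hac [-> ->]]]]]]].
have hp : perm_eq (V ++ [:: a; c] ++ W) (V ++ [:: c; a] ++ W).
  by rewrite perm_cat2l perm_cat2r (perm_catC [:: a] [:: c]).
have ha1 : a < j by lia.
have ha2 : (j < a) = false by lia.
have hc1 : (c < j) = false by lia.
have hc2 : j < c by lia.
have f1 : filter (fun x => x < j) (V ++ [:: a; c] ++ W) = filter (fun x => x < j) (V ++ [:: c; a] ++ W).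
  by rewrite !filter_cat /= ha1 hc1.
have f2 : filter (fun x => j < x) (V ++ [:: a; c] ++ W) = filter (fun x => j < x) (V ++ [:: c; a] ++ W).
  by rewrite !filter_cat /= ha2 hc2.
split; apply: inv_transfer => //; by rewrite perm_sym.
Qed.

Lemma congj_inv j P S B u v : j \notin P -> congj j u v -> (Inv j P S B u <-> Inv j P S B v).
Proof.
move=> jP; elim.
- by move=> x y; apply: cstep_inv.
- by [].
- by move=> x y _ IH; split; apply IH.
- by move=> x y z _ IH1 _ IH2; split => h; [apply/IH2/IH1 | apply/IH1/IH2].
Qed.

Lemma lgood_minimal j (s P S B : seq nat) : uniq s -> s = P ++ j :: S ++ B ->
  all (fun x => x < j) S -> all (fun x => j < x) B -> minimal_in_class j s.
Proof.
move=> hu hs hS hB t hc hle.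
have hu' := hu; rewrite hs cat_uniq in hu'; move/and3P: hu' => [_ hnh /andP[jSB _]].
have jP : j \notin P by move/hasPn: hnh => /(_ j); apply; rewrite inE eqxx.
have hfS : filter (fun x => x < j) (S ++ B) = S by rewrite filter_cat (filter_nil hB) cats0; apply/all_filterP.
have hfB : filter (fun x => j < x) (S ++ B) = B by rewrite filter_cat (filter_nil2 hS); apply/all_filterP.
have HIs : Inv j P S B s by split => //; exists (S ++ B).
have [hut [R [et [jR [h1 h2]]]]] := (congj_inv S B jP hc).1 HIs.
case: (decomp jR) => [[S' [B' [eR [hS' hB']]]]|[V [c [a [W [eR hac]]]]]].
  subst R; move: h1 h2; rewrite !filter_cat (filter_nil hB') cats0 (filter_nil2 hS').
  move/all_filterP in hS'; move/all_filterP in hB'.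
  by rewrite hS' hB' => eS eB; rewrite et hs -eS -eB.
exfalso; subst R.
have aS : a \in S by rewrite -h1 mem_filter mem_cat !inE eqxx !orbT andbT; lia.
have cB : c \in B by rewrite -h2 mem_filter mem_cat !inE eqxx !orbT andbT; lia.
have e1 : forall X, P ++ j :: V ++ X = (P ++ j :: V) ++ X by move=> X; rewrite -catA.
have hv : vinv t a c.
  rewrite /vinv et e1; apply/and4P; split; first lia.
    by rewrite mem_cat !inE eqxx !orbT.
    by rewrite mem_cat !inE eqxx !orbT.
  move: hut; rewrite et e1 cat_uniq => /and3P[_ hnh2 /andP[cn /andP[an _]]].
  have caL : (c \in P ++ j :: V) = false.
    by apply/negbTE; move/hasPn: hnh2; apply; rewrite inE eqxx.
  have aaL : (a \in P ++ j :: V) = false.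
    by apply/negbTE; move/hasPn: hnh2; apply; rewrite !inE eqxx orbT.
  rewrite !index_cat caL aaL /= eqxx.
  have -> : (c == a) = false.
    by apply/negbTE; rewrite neq_ltn (ltn_trans (proj1 (andP hac)) (proj2 (andP hac))) orbT.
  by rewrite eqxx addn0 addn1.
have := hle _ _ hv; rewrite /vinv hs => /and4P[_ _ _].
have aP : (a \in P) = false.
  by apply/negbTE; move/hasPn: hnh; apply; rewrite inE mem_cat aS orbT.
have cP : (c \in P) = false.
  by apply/negbTE; move/hasPn: hnh; apply; rewrite inE mem_cat cB !orbT.
have cS : (c \in S) = false.
  apply/negP => hcS; have := allP hS _ hcS; rewrite ltnNge ltnW //; exact: (proj2 (andP hac)).
rewrite !index_cat aP cP /=. rewrite !index_cat aS cS.
have -> : (j == c) = false by apply/negbTE; rewrite neq_ltn (proj2 (andP hac)).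
have -> : (j == a) = false by apply/negbTE; rewrite neq_ltn (proj1 (andP hac)) orbT.
have := index_mem a S; rewrite aS => hi.
rewrite ltn_add2l ltnS => h.
by have := ltn_trans (leq_ltn_trans (leq_addr _ _) h) hi; rewrite ltnn.
Qed.

Theorem theorem1p1 (n j : nat) (sigma : seq nat) :
  3 <= n -> 2 <= j <= n - 1 -> is_perm n sigma ->
  (minimal_in_class j sigma <->
   exists ws : seq nat, reduced_word n ws sigma /\ accepted n j ws).
Proof.
rewrite /is_perm => hn hj hp.
have hu : uniq sigma by rewrite (perm_uniq hp) iota_uniq.
have hsz : size sigma = n by rewrite (perm_size hp) size_iota.
have hj' : 1 <= j <= n by lia.
split.
- move=> hmin.
  have jin : j \in sigma by rewrite (perm_mem hp) mem_iota; lia.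
  have [P [S [B [hs [hS hB]]]]] := minimal_lgood hu jin hmin.
  have hg := lgood_good hsz hs hS hB.
  have ha : uaccepting (if S is [::] then Hs (size P) else Is (size P + size S)).
    by case: (S).
  have [ws [hall [hw [hsw hf]]]] := construct hj' (erefl _) hp hg ha.
  exists ws; split; last by rewrite /accepted hf.
  by split => //; split => //; rewrite ninvE.
- move=> [ws [[hall [hw hsw]] hacc]].
  have hn' : ninv' (word_perm n ws) = size ws by rewrite hw -ninvE.
  have hg := run_inv hj' hall hn'.
  rewrite hw in hg.
  have [P [S [B [hs [hS hB]]]]] := good_lgood hsz hg hacc.
  exact: lgood_minimal hu hs hS hB.
Qed.
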